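(* Let $\mathbf{A}$ be an algebra and $B,C$ subuniverses of $\mathbf{A}$. Suppose $B$ Jónsson absorbs $\mathbf{A}$ via a Jónsson absorption chain $d_0,\dots,d_k$ and $C$ Jónsson absorbs $\mathbf{A}$ via a Jónsson absorption chain $e_0,\dots,e_l$. Then there is a sequence of ternary terms $f_0,\dots,f_{kl+k}$ which is a Jónsson absorption chain both for $B$ and for $C$; explicitly, one may take $f_{a(l+1)+b}(x,y,z)=d_a(x,e_b(x,y,z),z)$ for $0\le a\le k$, $0\le b\le l$.
   Context: Jónsson absorption chain: for a subuniverse $B$ of $\mathbf{A}$, ternary terms $d_0,\dots,d_n$ of $\mathbf{A}$ such that $d_i(b,a,b')\in B$ for all $i$, all $b,b'\in B$, $a\in A$; $d_i(x,y,y)=d_{i+1}(x,x,y)$ for all $i<n$ and all $x,y\in A$; $d_0(x,y,z)=x$ and $d_n(x,y,z)=z$ for all $x,y,z\in A$. $B$ Jónsson absorbs $\mathbf{A}$ if such a chain exists. *)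

(* Defs.v *)
From mathcomp Require Import all_boot.
Set Implicit Arguments. Unset Strict Implicit. Unset Printing Implicit Defensive.

Record signature := Signature { sym : Type; arity : sym -> nat }.

Record algebra (S : signature) := Algebra {
  carrier :> Type;
  op : forall s : sym S, ('I_(arity s) -> carrier) -> carrier }.

Inductive term (S : signature) (X : Type) : Type :=
  | Var : X -> term S X
  | App : forall s : sym S, ('I_(arity s) -> term S X) -> term S X.
Arguments Var {S X} x.
Arguments App {S X} s ts.

Fixpoint eval (S : signature) (A : algebra S) (X : Type) (env : X -> A)
  (t : term S X) : A :=
  match t with
  | Var x => env x
  | App s ts => @op S A s (fun j => eval env (ts j))
  end.

Fixpoint tsubst (S : signature) (X Y : Type) (sigma : X -> term S Y)
  (t : term S X) : term S Y :=
  match t with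
  | Var x => sigma x
  | App s ts => App s (fun j => tsubst sigma (ts j))
  end.

Definition env3 (T : Type) (x y z : T) : 'I_3 -> T :=
  fun i => match val i with 0 => x | 1 => y | _ => z end.

Definition tterm (S : signature) := term S 'I_3.
Definition tfun (S : signature) (A : algebra S) (t : tterm S) (x y z : A) : A :=
  eval (env3 x y z) t.

Definition vx (S : signature) : tterm S := Var (@Ordinal 3 0 isT).
Definition vy (S : signature) : tterm S := Var (@Ordinal 3 1 isT).
Definition vz (S : signature) : tterm S := Var (@Ordinal 3 2 isT).

Definition compose3 (S : signature) (t u1 u2 u3 : tterm S) : tterm S :=
  tsubst (env3 u1 u2 u3) t.

Definition subuniverse (S : signature) (A : algebra S) (B : A -> Prop) : Prop :=
  forall (s : sym S) (args : 'I_(arity s) -> A),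
    (forall j, B (args j)) -> B (@op S A s args).

Definition jonsson_chain (S : signature) (A : algebra S) (B : A -> Prop)
  (n : nat) (d : nat -> tterm S) : Prop :=
  [/\ (forall i, i <= n -> forall (b b' a : A), B b -> B b' -> B (tfun (d i) b a b')),
      (forall i, i < n -> forall x y : A, tfun (d i) x y y = tfun (d i.+1) x x y),
      (forall x y z : A, tfun (d 0) x y z = x) &
      (forall x y z : A, tfun (d n) x y z = z)].

Definition jonsson_absorbs (S : signature) (A : algebra S) (B : A -> Prop) : Prop :=
  subuniverse B /\ exists n d, @jonsson_chain S A B n d.

(* Main.v *)
Require Import Defs.
From mathcomp Require Import all_boot.
From mathcomp Require Import zify.
From Stdlib Require Import FunctionalExtensionality.

Lemma eval_tsubst (S : signature) (A : algebra S) (X Y : Type) (env : Y -> A)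
  (sigma : X -> term S Y) t :
  eval env (tsubst sigma t) = eval (fun v => eval env (sigma v)) t.
Proof.
elim: t => [x|s ts IH] //=.
by congr (op _); apply: functional_extensionality => j; apply: IH.
Qed.

Lemma tfun_comp (S : signature) (A : algebra S) (t u1 u2 u3 : tterm S) (x y z : A) :
  tfun (compose3 t u1 u2 u3) x y z =
  tfun t (tfun u1 x y z) (tfun u2 x y z) (tfun u3 x y z).
Proof.
rewrite /tfun /compose3 eval_tsubst; congr (eval _ t).
apply: functional_extensionality => -[[|[|[|i]]] Hi] //=.
Qed.

Lemma tfun_vx (S : signature) (A : algebra S) (x y z : A) : tfun (vx S) x y z = x.
Proof. by []. Qed.
Lemma tfun_vz (S : signature) (A : algebra S) (x y z : A) : tfun (vz S) x y z = z.
Proof. by []. Qed.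

Lemma eval_sub (S : signature) (A : algebra S) (C : A -> Prop) (X : Type)
  (env : X -> A) t : subuniverse C -> (forall x, C (env x)) -> C (eval env t).
Proof.
move=> hC H; elim: t => [x|s ts IH] /=; first exact: H.
by apply: hC => j; apply: IH.
Qed.

Lemma divmod_l (a b l : nat) : b <= l ->
  (a * l.+1 + b) %/ l.+1 = a /\ (a * l.+1 + b) %% l.+1 = b.
Proof.
move=> Hb; rewrite divnMDl // modnMDl divn_small ?modn_small ?addn0 //; lia.
Qed.

Theorem lemma2p3 (S : signature) (A : algebra S) (B C : A -> Prop)
  (hB : subuniverse B) (hC : subuniverse C)
  (k l : nat) (d e : nat -> tterm S)
  (hd : jonsson_chain B k d) (he : jonsson_chain C l e) :
  exists f : nat -> tterm S,
    (forall a b, a <= k -> b <= l ->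
       f (a * l.+1 + b) = compose3 (d a) (vx S) (e b) (vz S)) /\
    jonsson_chain B (k * l + k) f /\ jonsson_chain C (k * l + k) f.
Proof.
case: hd => dabs dstep d0 dk; case: he => eabs estep e0 el.
pose f n := compose3 (d (n %/ l.+1)) (vx S) (e (n %% l.+1)) (vz S).
have Ef : forall a b, b <= l -> f (a * l.+1 + b) = compose3 (d a) (vx S) (e b) (vz S).
  by move=> a b Hb; rewrite /f; case: (@divmod_l a b l Hb) => -> ->.
have decomp : forall n, n = n %/ l.+1 * l.+1 + n %% l.+1 by move=> n; apply: divn_eq.
have Hmod : forall n, n %% l.+1 <= l by move=> n; rewrite -ltnS ltn_mod.
have Tf : forall a b (x y z : A), b <= l ->
   tfun (f (a * l.+1 + b)) x y z = tfun (d a) x (tfun (e b) x y z) z.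
  by move=> a b x y z Hb; rewrite Ef // tfun_comp.
have Tfn : forall n (x y z : A),
   tfun (f n) x y z = tfun (d (n %/ l.+1)) x (tfun (e (n %% l.+1)) x y z) z.
  by move=> n x y z; rewrite /f tfun_comp.
have Hdivk : forall n, n <= k * l + k -> n %/ l.+1 <= k.
  move=> n Hn; rewrite -ltnS ltn_divLR //; lia.
have step : forall i, i < k * l + k -> forall x y : A,
    tfun (f i) x y y = tfun (f i.+1) x x y.
  move=> i Hi x y; rewrite (decomp i).
  set a := i %/ l.+1; set b := i %% l.+1.
  have Hb := Hmod i; rewrite -/b in Hb.
  have Ha : a < k.
    have := Hdivk i (ltnW Hi); rewrite -/a leq_eqVlt => /orP [/eqP Ea|//].
    move: Hi; rewrite (decomp i) -/a -/b Ea; lia.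
  case: (ltngtP b l) => Hbl; [| by lia |].
  - rewrite -addnS Tf // Tf // estep //.
  - rewrite Tf // Hbl el.
    have -> : (a * l.+1 + l).+1 = a.+1 * l.+1 + 0 by rewrite mulSn; lia.
    by rewrite Tf // e0 dstep.
have f0 : forall x y z : A, tfun (f 0) x y z = x.
  by move=> x y z; rewrite Tfn d0.
have fk : forall x y z : A, tfun (f (k * l + k)) x y z = z.
  move=> x y z; have -> : k * l + k = k * l.+1 + 0 by rewrite mulnS; lia.
  by rewrite Tf // dk.
exists f; split; first by move=> a b _; apply: Ef.
split; split=> //.
- move=> i Hi b0 b1 a0 Hb0 Hb1; rewrite Tfn; exact: dabs (Hdivk i Hi) _ _ _ Hb0 Hb1.
- move=> i Hi b0 b1 a0 Hb0 Hb1; rewrite /tfun /f /compose3 eval_tsubst.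
  apply: eval_sub hC _ => -[[|[|[|j]]] Hj] //=.
  exact: (eabs _ (Hmod i) _ _ _ Hb0 Hb1).
Qed.
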